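(* Let $g \ge h \ge 2$ be integers. There is a constant $c>0$ depending only on $g$ and $h$ such that for every positive integer $n$ there exists a weak-$C_h[g]$ set $A \subset \{1,2,\dots,n\}$ with $$|A| \ge c\, n^{\left(1-\frac{1}{h}\right)\left(1-\frac{1}{g}\right)\left(1+\frac{1}{hg-1}\right)}.$$
   Context: A set of integers $A$ is called a weak-$C_h[g]$ set if for every set $X$ of $h$ integers there do not exist $g$ distinct integers $k_1,\dots,k_g$ such that the translates $X+k_1,\dots,X+k_g$ are pairwise disjoint and all contained in $A$ (here $X+k=\{x+k : x\in X\}$). In words, $A$ contains no $g$ pairwise disjoint translates of a common $h$-element set. *)

(* Defs.v *)
From mathcomp Require Import all_boot all_algebra.
From mathcomp Require Import finmap.
From Stdlib Require Import Reals.
Set Implicit Arguments. Unset Strict Implicit. Unset Printing Implicit Defensive.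
Import GRing.Theory Num.Theory.
Local Open Scope fset_scope.
Local Open Scope ring_scope.

Definition translate (X : {fset int}) (k : int) : {fset int} :=
  [fset x + k | x in X].

Definition weak_Chg (h g : nat) (A : {fset int}) : Prop :=
  ~ exists (X K : {fset int}),
      [/\ #|` X| = h, #|` K| = g,
          (forall k1 k2, k1 \in K -> k2 \in K -> k1 != k2 ->
             [disjoint translate X k1 & translate X k2]) &
          (forall k, k \in K -> translate X k `<=` A)].

Definition weak_exponent (h g : nat) : R :=
  Rmult (Rmult (Rminus R1 (Rinv (INR h))) (Rminus R1 (Rinv (INR g))))
        (Rplus R1 (Rinv (Rminus (INR (h * g)%N) R1))).

Definition sub_interval (n : nat) (A : {fset int}) : Prop :=
  forall a : int, a \in A -> (1 <= a) && (a <= n%:Z).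

(* Main.v *)
Require Import Defs.
From Stdlib Require Import Reals Lra.
From mathcomp Require Import all_boot all_algebra.
From mathcomp Require Import finmap.
From mathcomp Require Import zify.
Set Implicit Arguments. Unset Strict Implicit. Unset Printing Implicit Defensive.
Import GRing.Theory Num.Theory.

Lemma leq_expr m n e : m <= n -> m ^ e <= n ^ e.
Proof. by move=> H; elim: e => // e IH; rewrite !expnS leq_mul. Qed.

Lemma bin_le_exp n k : 'C(n, k) <= n ^ k.
Proof.
elim: n k => [|n IH] [|k] //.
rewrite binS expnS.
have h1 := IH k; have h2 := IH k.+1.
have h3 : n ^ k <= n.+1 ^ k by rewrite leq_expr.
rewrite expnS in h2.
have : n * n ^ k <= n * n.+1 ^ k by rewrite leq_mul2l h3 orbT.
nia.
Qed.
Lemma card_fam0 (T : finType) q (U : {set T}) :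
  #|[set f : {ffun T -> 'I_q.+1} | [forall i in U, f i == ord0]]| = q.+1 ^ (#|T| - #|U|).
Proof.
transitivity #|family (fun i => if i \in U then pred1 (@ord0 q) else predT)|.
  apply: eq_card => f; rewrite inE; apply/forall_inP/familyP => H x.
    by case: ifP => xU; rewrite ?inE ?(H x xU).
  by move=> xU; have := H x; rewrite xU.
rewrite card_family foldrE big_map big_enum /=.
rewrite (bigID (mem U)) /= big1; last by move=> x ->; rewrite card1.
rewrite mul1n (eq_bigr (fun _ => q.+1)); last by move=> x /negbTE ->; rewrite cardT /= size_enum_ord.
by rewrite prod_nat_const -(cardC U) addKn.
Qed.

Lemma card_as_sum (T : finType) (A : {set T}) : #|A| = \sum_(x : T) (x \in A).
Proof. by rewrite -sum1_card big_mkcond /=; apply: eq_bigr => x _; case: (x \in A). Qed.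

Lemma exists_good (T : finType) (F : {set {set T}}) r q : 0 < r ->
  (forall U, U \in F -> r <= #|U|) ->
  exists f : {ffun T -> 'I_q.+1},
    #|T| * q.+1 ^ r.-1 + q.+1 ^ r * #|[set U in F | U \subset [set i | f i == ord0]]|
      <= q.+1 ^ r * #|[set i | f i == ord0]| + #|F|.
Proof.
move=> r0 HF.
set Q := q.+1.
have sumS : \sum_(f : {ffun T -> 'I_Q}) #|[set i | f i == ord0]| = #|T| * Q ^ (#|T| - 1).
  under eq_bigr do rewrite card_as_sum.
  rewrite exchange_big /=.
  transitivity (\sum_(i : T) Q ^ (#|T| - 1)); last by rewrite sum_nat_const.
  apply: eq_bigr => i _; rewrite -(cards1 i) -(card_fam0 q [set i]).
  rewrite card_as_sum; apply: eq_bigr => f _; rewrite !inE.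
  congr (nat_of_bool _); apply/idP/forall_inP => [H j|H]; last by apply: H; rewrite inE.
  by rewrite inE => /eqP ->.
have sumB : Q ^ r * \sum_(f : {ffun T -> 'I_Q}) #|[set U in F | U \subset [set i | f i == ord0]]|
            <= #|F| * Q ^ #|T|.
  under eq_bigr do rewrite card_as_sum.
  rewrite exchange_big /= big_distrr /=.
  apply: (@leq_trans (\sum_(U in F) Q ^ #|T|)); last by rewrite sum_nat_const.
  rewrite (bigID (mem F)) /= [X in _ + X <= _]big1 ?addn0; last first.
    move=> U /negbTE UF; rewrite big1 ?muln0 // => f _; by rewrite inE UF.
  apply: leq_sum => U UF.
  have -> : \sum_(f : {ffun T -> 'I_Q}) (U \in [set U0 in F | U0 \subset [set i | f i == ord0]])
       = #|[set f : {ffun T -> 'I_Q} | [forall i in U, f i == ord0]]|.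
    rewrite card_as_sum; apply: eq_bigr => f _; rewrite !inE UF /=.
    congr (nat_of_bool _); apply/subsetP/forall_inP => H x xU.
      by have := H x xU; rewrite inE.
    by rewrite inE H.
  rewrite card_fam0 -expnD leq_pexp2l //.
  have := HF U UF; have := subset_leq_card (subsetT U); rewrite cardsT => a b; by rewrite addnBA // leq_subLR leq_add2r.
case: (boolP [exists f : {ffun T -> 'I_Q}, #|T| * Q ^ r.-1 + Q ^ r * #|[set U in F | U \subset [set i | f i == ord0]]|
      <= Q ^ r * #|[set i | f i == ord0]| + #|F|]) => [Hex|].
  by case/existsP: Hex => f Hf; exists f.
rewrite negb_exists => /forallP H.
have Hs : \sum_(f : {ffun T -> 'I_Q}) (Q ^ r * #|[set i | f i == ord0]| + #|F|).+1 <=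
          \sum_(f : {ffun T -> 'I_Q}) (#|T| * Q ^ r.-1 + Q ^ r * #|[set U in F | U \subset [set i | f i == ord0]]|).
  by apply: leq_sum => f _; have := H f; rewrite -ltnNge.
have L : \sum_(f : {ffun T -> 'I_Q}) (Q ^ r * #|[set i | f i == ord0]| + #|F|).+1
    = Q ^ r * (#|T| * Q ^ (#|T| - 1)) + #|F| * Q ^ #|T| + Q ^ #|T|.
  under eq_bigr do rewrite -addn1.
  rewrite !big_split /= -big_distrr /= sumS !sum_nat_const card_ffun !card_ord.
  by rewrite muln1 (mulnC (Q ^ #|T|)).
have R : \sum_(f : {ffun T -> 'I_Q}) (#|T| * Q ^ r.-1 + Q ^ r * #|[set U in F | U \subset [set i | f i == ord0]]|)
    = #|T| * Q ^ r.-1 * Q ^ #|T| + Q ^ r * \sum_(f : {ffun T -> 'I_Q}) #|[set U in F | U \subset [set i | f i == ord0]]|.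
  rewrite big_split /= -big_distrr /= sum_nat_const card_ffun !card_ord.
  by rewrite big_distrr /= (mulnC (Q ^ #|T|)) mulnA.
rewrite L R in Hs.
have E : Q ^ r * (#|T| * Q ^ (#|T| - 1)) = #|T| * Q ^ r.-1 * Q ^ #|T|.
  case: (posnP #|T|) => [-> | Tp]; first by rewrite !mul0n muln0.
  rewrite mulnCA -mulnA -!expnD; congr (_ * (_ ^ _)); lia.
rewrite E in Hs.
have hQ : 0 < Q ^ #|T| by rewrite expn_gt0.
move: sumB Hs; set a := Q ^ r * _; set b := #|T| * _ * _; lia.
Qed.

Lemma card_bigcup_le (T I : finType) (B : {pred I}) (c : I -> {set T}) :
  #|\bigcup_(U in B) c U| <= \sum_(U in B) #|c U|.
Proof.
apply: (big_ind2 (fun (X : {set T}) (n : nat) => #|X| <= n)); first by rewrite cards0.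
  move=> X1 n1 X2 n2 h1 h2; rewrite cardsU.
  by apply: leq_trans (leq_subr _ _) _; apply: leq_add.
by [].
Qed.

Lemma deletion (T : finType) (F : {set {set T}}) r q : 0 < r ->
  (forall U, U \in F -> r <= #|U|) ->
  exists A : {set T}, (forall U, U \in F -> ~~ (U \subset A)) /\
    #|T| * q.+1 ^ r.-1 <= q.+1 ^ r * #|A| + #|F|.
Proof.
move=> r0 HF; have [f Hf] := exists_good q r0 HF.
set S := [set i | f i == ord0] in Hf.
set B := [set U in F | U \subset S] in Hf.
pose c (U : {set T}) := if [pick x in U] is Some x then [set x] else set0.
pose W := \bigcup_(U in B) c U.
have cP : forall (U : {set T}) (x : T), x \in U -> exists2 y, y \in U & c U = [set y].
  move=> U x xU; rewrite /c; case: pickP => [y yU | H]; first by exists y.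
  by have := H x; rewrite xU.
have c1 : forall U : {set T}, #|c U| <= 1.
  by move=> U; rewrite /c; case: pickP => [y _|_]; rewrite ?cards1 ?cards0.
exists (S :\: W); split.
  move=> U UF; apply/negP => sub.
  have UB : U \in B by rewrite inE UF (subset_trans sub) // subsetDl.
  have : 0 < #|U| by apply: leq_trans r0 (HF U UF).
  rewrite card_gt0 => /set0Pn [x xU].
  have [y yU cU] := cP U x xU.
  have yW : y \in W by apply/bigcupP; exists U => //; rewrite cU set11.
  by have := subsetP sub y yU; rewrite inE yW.
have hW : #|W| <= #|B|.
  apply: leq_trans (card_bigcup_le _ _) _.
  rewrite -sum1_card; exact: leq_sum.
have hA : #|S| <= #|S :\: W| + #|B|.
  rewrite cardsD; have : #|S :&: W| <= #|W| by rewrite subset_leq_card // subsetIr.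
  lia.
have : q.+1 ^ r * #|S| <= q.+1 ^ r * #|S :\: W| + q.+1 ^ r * #|B|.
  by rewrite -mulnDr leq_mul2l hA orbT.
move: Hf; set x1 := q.+1 ^ r * _; set x2 := q.+1 ^ r * #|S|; set x3 := q.+1 ^ r * #|S :\: W|.
lia.
Qed.

Definition emb n (i : 'I_n) : int := Posz i.+1.
Definition Aint n (A : {set 'I_n}) : {fset int} := [fset emb i | i in A]%fset.

Lemma t1 (X : {fset int}) k z : z \in translate X k -> exists2 x, x \in X & z = (x + k)%R.
Proof. by move/imfsetP => [x /= xX ->]; exists x. Qed.
Lemma t2 (X : {fset int}) k x : x \in X -> (x + k)%R \in translate X k.
Proof. by move=> xX; apply/imfsetP; exists x. Qed.
Lemma t3 (X : {fset int}) k : #|` translate X k| = #|` X|.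
Proof. by rewrite card_imfset /=; last exact: addIr. Qed.
Lemma a1 n (A : {set 'I_n}) z : z \in Aint A -> exists2 i, i \in A & z = emb i.
Proof. by move/imfsetP => [x /= xX ->]; exists x. Qed.
Lemma a2 n (A : {set 'I_n}) i : i \in A -> emb i \in Aint A.
Proof. by move=> xX; apply/imfsetP; exists i. Qed.
Lemma emb_inj n : injective (@emb n).
Proof. move=> i j; rewrite /emb => H; apply: val_inj => /=; lia. Qed.
Lemma card_pre m (e : 'I_m -> int) (Y : {fset int}) : injective e ->
  (forall y, y \in Y -> exists i, e i = y) -> #|[set i | e i \in Y]| = #|` Y|.
Proof.
move=> ei HY; rewrite cardE -(size_map e); apply: perm_size; apply: uniq_perm.
- by rewrite map_inj_uniq // enum_uniq.
- exact: fset_uniq.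
move=> y; apply/mapP/idP => [[i]|yY].
  by rewrite mem_enum inE => ? ->.
by have [i ei'] := HY y yY; exists i; rewrite // mem_enum inE ei'.
Qed.

Lemma card_bigcup_disj (T I : finType) (s : seq I) (V : I -> {set T}) : uniq s ->
  (forall i j, i \in s -> j \in s -> i != j -> V i :&: V j = set0) ->
  #|\bigcup_(i <- s) V i| = (\sum_(i <- s) #|V i|)%N.
Proof.
elim: s => [|a s IH] /=; first by rewrite !big_nil cards0.
case/andP => as_ us H.
rewrite !big_cons cardsU -IH //; last first.
  by move=> i j is_ js ij; apply: H; rewrite ?inE ?is_ ?js ?orbT.
suff -> : V a :&: \bigcup_(i <- s) V i = set0 by rewrite cards0 subn0.
apply/setP => x; rewrite !inE; apply/negP => /andP [xa].
rewrite bigcup_seq => /bigcupP [i is_ xi].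
have aI : a != i by apply: contraNneq as_ => ->.
have := H a i; rewrite !inE eqxx is_ orbT => /(_ isT isT aI) /setP /(_ x).
by rewrite !inE xa xi.
Qed.

Lemma ord_of_int m (z : int) : (0 <= z)%R -> (z < m%:Z)%R -> exists i : 'I_m, (i%:Z = z)%R.
Proof.
case: z => [k|k] // _ hk; have hk' : (k < m)%N by lia.
by exists (Ordinal hk').
Qed.

Definition psi n (PQ : {set 'I_(n+n)} * {set 'I_n}) : {set 'I_n} :=
  [set i : 'I_n | (i \in PQ.2) ||
     [exists p in PQ.1, [exists j in PQ.2, (p + j == i + n)%N]]].
Definition Dset n h g : {set {set 'I_(n+n)} * {set 'I_n}} :=
  setX [set P : {set 'I_(n+n)} | #|P| == h.-1] [set Q : {set 'I_n} | #|Q| == g].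
Definition Ffam n h g : {set {set 'I_n}} :=
  [set U in psi (n:=n) @: Dset n h g | (h * g <= #|U|)%N].

Lemma weak_ok n h g (A : {set 'I_n}) : (2 <= h)%N -> (2 <= g)%N ->
  (forall U, U \in Ffam n h g -> ~~ (U \subset A)) -> weak_Chg h g (Aint A).
Proof.
move=> h2 g2 HA [X [K [cX cK disj sub]]].
have XK : forall x k, x \in X -> k \in K -> (1 <= x + k)%R /\ (x + k <= n%:Z)%R.
  move=> x k xX kK; have /a1 [i _ ->] := fsubsetP (sub k kK) _ (t2 k xX).
  by rewrite /emb !lez_nat ltn_ord.
have [x0 x0X] : exists x0, x0 \in X.
  by apply/fset0Pn; rewrite -cardfs_gt0 cX; lia.
have [k0 k0K] : exists k0, k0 \in K.
  by apply/fset0Pn; rewrite -cardfs_gt0 cK; lia.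
pose eQ (j : 'I_n) : int := (Posz j.+1 - x0)%R.
pose Q := [set j | eQ j \in K].
pose eP (p : 'I_(n+n)) : int := (Posz p - Posz n + x0)%R.
pose P := [set p | eP p \in (X `\ x0)%fset].
have eQi : injective eQ by move=> i1 j1; rewrite /eQ => H; apply: val_inj => /=; lia.
have ePi : injective eP by move=> i j; rewrite /eP => H; apply: val_inj => /=; lia.
have cardQ : #|Q| = g.
  rewrite card_pre // => k kK; have [h1 h3] := XK x0 k x0X kK.
  have [j ej] : exists j : 'I_n, (j%:Z = x0 + k - 1)%R by apply: ord_of_int; lia.
  by exists j; rewrite /eQ; lia.
have cardP : #|P| = h.-1.
  rewrite card_pre //.
    by have := cardfsD1 x0 X; rewrite x0X cX; lia.
  move=> x /fsetD1P [_ xX]; have [h1 h3] := XK x k0 xX k0K; have [h4 h5] := XK x0 k0 x0X k0K.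
  have [p ep] : exists p : 'I_(n + n), (p%:Z = x - x0 + n%:Z)%R by apply: ord_of_int; lia.
  by exists p; rewrite /eP; lia.
pose V (j : 'I_n) := [set i : 'I_n | emb i \in translate X (eQ j)].
have Ueq : \bigcup_(j in Q) V j = psi (P, Q).
  apply/setP => i; rewrite [in RHS]inE /=.
  apply/bigcupP/orP.
    case => j jQ; rewrite inE => /t1 [x xX ex].
    have jK : eQ j \in K by rewrite inE in jQ.
    case: (eqVneq x x0) => [xe|xne].
      left; have -> : i = j; last by [].
      by apply: val_inj; move: ex; rewrite /emb /eQ xe addrC subrK => -[].
    right; have [h1 h3] := XK x _ xX jK; have [h4 h5] := XK x0 _ x0X jK.
    have [p ep] : exists p : 'I_(n+n), (p%:Z = x - x0 + n%:Z)%R.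
      by apply: ord_of_int; rewrite /eQ in h1 h3 h4 h5; lia.
    apply/existsP; exists p; apply/andP; split.
      rewrite inE; apply/fsetD1P; split; rewrite /eP; last by rewrite ep; have -> : (x - x0 + n%:Z - n%:Z + x0 = x)%R by lia.
      by rewrite ep; have -> : (x - x0 + n%:Z - n%:Z + x0 = x)%R by lia.
    apply/existsP; exists j; rewrite jQ /=; apply/eqP.
    move: ex; rewrite /emb /eQ; lia.
  case => [iQ | /existsP [p /andP [pP /existsP [j /andP [jQ /eqP e]]]]].
    exists i => //; rewrite inE; apply/imfsetP; exists x0 => //=; rewrite /emb /eQ; lia.
  exists j => //; rewrite inE; move: pP; rewrite inE => /fsetD1P [_ xX].
  by apply/imfsetP; exists (eP p) => //; rewrite /emb /eQ /eP; lia.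
have Usub : \bigcup_(j in Q) V j \subset A.
  apply/subsetP => i /bigcupP [j jQ]; rewrite inE => /(fsubsetP (sub _ _)).
  rewrite inE in jQ => /(_ jQ) /a1 [i' i'A /emb_inj ->] //.
have Ucard : #|\bigcup_(j in Q) V j| = (h * g)%N.
  rewrite -big_enum /= card_bigcup_disj ?enum_uniq //; last first.
    move=> i j; rewrite !mem_enum !inE => iQ jQ ij; apply/setP => z; rewrite !inE.
    apply/negP => /andP [a b].
    have : eQ i != eQ j by apply: contra ij => /eqP /eQi ->.
    move/(disj _ _ iQ jQ) /fdisjointP /(_ _ a); by rewrite b.
  rewrite big_enum /= (eq_bigr (fun _ => h)); first by rewrite sum_nat_const cardQ mulnC.
  move=> j; rewrite inE => jQ; rewrite card_pre ?t3 //; first exact: emb_inj.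
  by move=> z /(fsubsetP (sub _ jQ)) /a1 [i _ ->]; exists i.
have : psi (P, Q) \in Ffam n h g.
  rewrite inE -Ueq Ucard leqnn andbT; apply/imsetP; exists (P, Q) => //.
  by rewrite !inE cardP cardQ !eqxx.
by move/HA; rewrite -Ueq Usub.
Qed.

Section RealPart.
Local Open Scope R_scope.
Lemma real_part (h s m : nat) (N Qr Ar : R) :
  leq 1 m -> 1 <= N -> 0 <= Qr ->
  Qr ^ m < 2 ^ h * N ^ s ->
  N <= 2 * (Qr + 1) * Ar ->
  / (2 * (2 ^ h + 1)) * Rpower N (1 - INR s / INR m) <= Ar.
Proof.
move=> m1 N1 Q0 HQ HN.
have m0 : 0 < INR m by apply: lt_0_INR; apply/ltP.
set al := INR s / INR m.
have Np : 0 < N by lra.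
set Na := Rpower N al.
have Na1 : 1 <= Na.
  rewrite /Na -(Rpower_O N) //; apply: Rle_Rpower => //.
  rewrite /al; apply: Rmult_le_pos; [apply: pos_INR | apply: Rlt_le; apply: Rinv_0_lt_compat => //].
have h1 : 1 <= 2 ^ h by apply: pow_R1_Rle; lra.
have Qb : Qr <= 2 ^ h * Na.
  apply: Rnot_lt_le => H.
  have : (2 ^ h * Na) ^ m <= Qr ^ m by apply: pow_incr; split; [nra|lra].
  rewrite Rpow_mult_distr.
  have -> : Na ^ m = N ^ s.
    rewrite /Na -Rpower_pow; last by unfold Rpower; apply: exp_pos.
    rewrite Rpower_mult /al -Rpower_pow //; congr Rpower; field; lra.
  have : 2 ^ h <= (2 ^ h) ^ m.
    rewrite -{1}(pow_1 (2 ^ h)); apply: Rle_pow => //; by apply/leP.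
  have : 0 < N ^ s by apply: pow_lt.
  nra.
have E : Rpower N (1 - al) = N / Na.
  have : Rpower N (1 - al) * Na = N.
    rewrite /Na -Rpower_plus (_ : 1 - al + al = 1); [exact: Rpower_1 | ring].
  have : 0 < Na by lra.
  move=> Hpos Heq; rewrite -{2}Heq; field; lra.
rewrite E.
have Qp : 0 < Qr + 1 by lra.
have : N / (2 * (Qr + 1)) <= Ar.
  apply: (Rmult_le_reg_r (2 * (Qr + 1))); first lra.
  rewrite /Rdiv Rmult_assoc Rinv_l; nra.
have : N / (2 * (2 ^ h + 1) * Na) <= N / (2 * (Qr + 1)).
  apply: Rmult_le_compat_l; first lra.
  apply: Rinv_le_contravar; first lra.
  nra.
have -> : / (2 * (2 ^ h + 1)) * (N / Na) = N / (2 * (2 ^ h + 1) * Na) by field; lra.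
lra.
Qed.
Lemma INR_expn m e : INR (expn m e) = INR m ^ e.
Proof. elim: e => [|e IH] //=; by rewrite expnS mult_INR IH. Qed.

Lemma INR2 : INR 2 = 2.
Proof. by simpl; lra. Qed.

Definition c0 (h : nat) : R := / (2 * (2 ^ h + 1)).
Lemma c0_pos h : 0 < c0 h.
Proof. rewrite /c0; apply: Rinv_0_lt_compat; have := pow_lt 2 h; lra. Qed.
End RealPart.

Lemma wexp h g : (2 <= h)%N -> (2 <= g)%N ->
  weak_exponent h g = Rminus R1 (Rdiv (INR (h + g - 2)) (INR (h * g).-1)).
Proof.
move=> h2 g2; rewrite /weak_exponent.
have E1 : INR (h + g - 2) = Rminus (Rplus (INR h) (INR g)) 2.
  rewrite minus_INR; last by apply/leP; lia.
  by rewrite plus_INR.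
have E2 : INR (h * g).-1 = Rminus (Rmult (INR h) (INR g)) 1.
  have : (h * g).-1.+1 = (h * g)%N by rewrite prednK // muln_gt0; apply/andP; split; lia.
  move/(f_equal INR); rewrite S_INR mult_INR => <-; lra.
have H2 : Rle 2 (INR h) by have := le_INR 2 h; rewrite /= => H; apply: H; apply/leP.
have G2 : Rle 2 (INR g) by have := le_INR 2 g; rewrite /= => H; apply: H; apply/leP.
rewrite E1 E2 mult_INR.
field; split; [|split]; try lra.
nra.
Qed.

Lemma card_Ffam n h g : (#|Ffam n h g| <= (n + n) ^ h.-1 * n ^ g)%N.
Proof.
apply: (@leq_trans #|psi (n:=n) @: Dset n h g|).
  by apply: subset_leq_card; apply/subsetP => U; rewrite inE => /andP [].
apply: leq_trans (leq_imset_card _ _) _.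
rewrite cardsX !card_draws !card_ord.
by apply: leq_mul; apply: bin_le_exp.
Qed.


Lemma lin1 (N P F : nat) : (N <= P + F)%N -> (2 * F <= N)%N -> (N <= 2 * P)%N.
Proof. lia. Qed.

Lemma e3l h g : (2 <= h)%N -> (2 <= g)%N -> (h.-1 + g = (h + g - 2).+1)%N.
Proof. lia. Qed.

Theorem theorem2 (g h : nat) (hh : (2 <= h)%N) (hgh : (h <= g)%N) :
  exists c : R, Rlt R0 c /\
    forall n : nat, (0 < n)%N ->
      exists A : {fset int},
        sub_interval n A /\
        weak_Chg h g A /\
        Rle (Rmult c (Rpower (INR n) (weak_exponent h g))) (INR #|` A|).
Proof.
have g2 : (2 <= g)%N by apply: leq_trans hh hgh.
exists (c0 h); split; first exact: c0_pos.
move=> n n0.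
set s := (h + g - 2)%N; set m := (h * g).-1; set r := (h * g)%N.
have m1 : (0 < m)%N by rewrite /m; nia.
have rm : r = m.+1 by rewrite /r /m prednK //; nia.
have Pex : exists Q, (2 ^ h * n ^ s <= Q ^ m)%N.
  exists (2 ^ h * n ^ s)%N; set k := (2 ^ h * n ^ s)%N.
  have k0 : (0 < k)%N by rewrite muln_gt0 !expn_gt0 n0.
  by rewrite -{1}(expn1 k) leq_pexp2l.
case: (ex_minnP Pex) => Q PQ Qmin.
have Q0 : (0 < Q)%N.
  case: Q PQ Qmin => // ; rewrite exp0n // leqn0 muln_eq0 !expn_eq0; lia.
case: Q Q0 PQ Qmin => // q _ PQ Qmin.
have Pq : (q ^ m < 2 ^ h * n ^ s)%N by rewrite ltnNge; apply/negP => /Qmin; lia.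
have r0 : (0 < r)%N by rewrite rm.
have HF : forall U, U \in Ffam n h g -> (r <= #|U|)%N by move=> U; rewrite inE => /andP [].
have [A [HA Hcard]] := deletion q r0 HF.
exists (Aint A); split.
  by move=> a /a1 [i _ ->]; rewrite /emb !lez_nat ltn_ord.
split; first exact: weak_ok.
have cardA : #|` Aint A| = #|A| by rewrite card_imfset /= ?cardE //; exact: emb_inj.
rewrite cardA.
have key : (n <= 2 * q.+1 * #|A|)%N.
  rewrite card_ord rm /= expnS in Hcard.
  have F1 : (2 * #|Ffam n h g| <= n * q.+1 ^ m)%N.
    apply: leq_trans (leq_mul (leqnn 2) (card_Ffam n h g)) _.
    have e1 : (n + n = 2 * n)%N by rewrite addnn -mul2n.
    have e3 : (h.-1 + g = s.+1)%N by rewrite /s; apply: e3l.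
    rewrite e1 expnMn !mulnA -expnS prednK; last exact: (leq_trans _ hh).
    rewrite -mulnA -expnD e3 expnS mulnCA mulnC.
    by rewrite mulnC leq_mul2l PQ orbT.
  set Z := (q.+1 ^ m)%N in F1 Hcard.
  have Z0 : (0 < Z)%N by rewrite expn_gt0.
  have E : (2 * q.+1 * #|A| * Z = 2 * (q.+1 * Z * #|A|))%N.
    by rewrite -!mulnA; congr (_ * (_ * _)); rewrite mulnC.
  have : (n * Z <= (2 * q.+1 * #|A|) * Z)%N.
    by rewrite E; apply: lin1 Hcard F1.
  by rewrite leq_pmul2r.
rewrite wexp //.
apply: (real_part (h := h) (s := s) (m := m)) => //.
- by have := le_INR 1 n; rewrite /= => H; apply: H; apply/leP.
- exact: pos_INR.
- have := lt_INR _ _ (elimT ltP Pq); rewrite mult_INR !INR_expn INR2; exact.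
- have := le_INR _ _ (elimT leP key); rewrite !mult_INR INR2 S_INR; lra.
Qed.
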